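(* Let $A$ be a $\mathbb{C}$-algebra, $Q$ a tropical field, and $X\subset A$ a generating set with presentation $0\to I\to\mathbb{C}[X]\to A\to0$ ($x\mapsto x$). Then the map $\pi_X:\mathbb{V}_Q(A)\to Q^X$, $v\mapsto(v(x))_{x\in X}$, takes values in the tropical variety $\operatorname{tr}_Q(I)$. Moreover the maps $\pi_X$ induce a bijection $\mathbb{V}_Q(A)\cong\varprojlim_{X}\operatorname{tr}_Q(I_X)$, the inverse limit over generating sets $X\subset A$ (ordered by inclusion, with coordinate projections as transition maps).
   Context: A tropical field $Q$ is a totally ordered abelian group (operation written $+$, tropical product $\otimes=+$, tropical sum $\oplus=\max$) with an adjoined least element $-\infty$. A valuation $v:A\to Q$ satisfies $v(ab)=v(a)+v(b)$, $v(a+b)\le\max(v(a),v(b))$, $v(0)=-\infty$, $v(c)=0$ for $c\in\mathbb{C}^\times$; $\mathbb{V}_Q(A)$ denotes the set of these. For $f=\sum_i C_i\vec x^{\vec m_i}\in\mathbb{C}[X]$ with $C_i\ne0$ (coefficients given the trivial valuation), its tropicalization is $T(f)(\vec q)=\max_i\langle\vec m_i,\vec q\rangle$, and $\operatorname{tr}(T(f))\subset Q^X$ is the set of $\vec q$ where this maximum is attained by at least two monomials; $\operatorname{tr}_Q(I)=\bigcap_{f\in I}\operatorname{tr}(T(f))$. *)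

(* Defs.v *)
From HB Require Import structures.
From mathcomp Require Import all_boot all_order all_algebra.
Set Implicit Arguments. Unset Strict Implicit. Unset Printing Implicit Defensive.
Import GRing.Theory.
Local Open Scope ring_scope.

Definition ordered_group (Q : zmodType) (leQ : rel Q) : Prop :=
  [/\ reflexive leQ, antisymmetric leQ, transitive leQ, total leQ &
      forall x y z : Q, leQ x y -> leQ (x + z) (y + z)].

(* The tropical field Q ∪ {-oo}: [None] is -oo, [Some a] is a ∈ Q. *)
Section Trop.
Variables (Q : zmodType) (leQ : rel Q).

Definition tle (a b : option Q) : bool :=
  match a, b with
  | None, _ => true
  | Some _, None => false
  | Some x, Some y => leQ x y
  end.

Definition tmax (a b : option Q) : option Q := if tle a b then b else a.

Definition tmul (a b : option Q) : option Q :=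
  match a, b with
  | Some x, Some y => Some (x + y)
  | _, _ => None
  end.

Definition tpow (a : option Q) (n : nat) : option Q :=
  match a with
  | Some x => Some (x *+ n)
  | None => if n == 0%N then Some 0 else None
  end.

Definition tmono (n : nat) (e : 'I_n -> nat) (q : 'I_n -> option Q) : option Q :=
  \big[tmul/Some 0]_(i < n) tpow (q i) (e i).

Definition tpoly (n k : nat) (e : 'I_k -> 'I_n -> nat) (q : 'I_n -> option Q)
  : option Q := \big[tmax/None]_(j < k) tmono (e j) q.

Definition in_trop_hyp (n k : nat) (e : 'I_k -> 'I_n -> nat) (q : 'I_n -> option Q)
  : Prop :=
  tpoly e q = None \/
  exists j1 j2 : 'I_k, j1 != j2 /\
     tmono (e j1) q = tpoly e q /\ tmono (e j2) q = tpoly e q.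
End Trop.

Section Alg.
Variables (K : fieldType) (A : comAlgType K).

(* The polynomial sum_j c_j x^{e_j} evaluated in A, where x : 'I_n -> A lists
   the variables occurring in it. *)
Definition peval (n k : nat) (x : 'I_n -> A) (c : 'I_k -> K)
  (e : 'I_k -> 'I_n -> nat) : A :=
  \sum_(j < k) c j *: \prod_(i < n) x i ^+ e j i.

Definition generating (X : A -> Prop) : Prop :=
  forall a : A, exists (n k : nat) (x : 'I_n -> A) (c : 'I_k -> K)
    (e : 'I_k -> 'I_n -> nat), (forall i, X (x i)) /\ a = peval x c e.

(* f ∈ I_X = ker(K[X] -> A), written in reduced form: distinct variables
   x_0..x_{n-1} of X, pairwise distinct exponent vectors, nonzero
   coefficients (f = sum_j c_j x^{e_j}).  Every element of K[X] has such a
   representation, unique up to reindexing. *)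
Definition ideal_elt (X : A -> Prop) (n k : nat) (x : 'I_n -> A)
  (c : 'I_k -> K) (e : 'I_k -> 'I_n -> nat) : Prop :=
  [/\ forall i, X (x i),
      injective x,
      forall j1 j2, (forall i, e j1 i = e j2 i) -> j1 = j2,
      forall j, c j != 0 &
      peval x c e = 0].

(* q ∈ Q^X (given as a function on A, only its values on X matter)
   lies in tr_Q(I_X) = ∩_{f ∈ I_X} tr(T(f)). *)
Definition in_trop_var (Q : zmodType) (leQ : rel Q) (X : A -> Prop)
  (q : A -> option Q) : Prop :=
  forall (n k : nat) (x : 'I_n -> A) (c : 'I_k -> K) (e : 'I_k -> 'I_n -> nat),
    ideal_elt X x c e -> in_trop_hyp leQ e (fun i => q (x i)).

Definition valuation (Q : zmodType) (leQ : rel Q) (v : A -> option Q) : Prop :=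
  [/\ forall a b, v (a * b) = tmul (v a) (v b),
      forall a b, tle leQ (v (a + b)) (tmax leQ (v a) (v b)),
      v 0 = None &
      forall c : K, c != 0 -> v (c%:A) = Some 0].
End Alg.

(* Main.v *)
Require Import Defs.
From HB Require Import structures.
From mathcomp Require Import all_boot all_order all_algebra.
From Stdlib Require Import Classical.
Set Implicit Arguments. Unset Strict Implicit.
Import GRing.Theory.
Local Open Scope ring_scope.

Lemma tle_refl (Q : zmodType) (leQ : rel Q) (HQ : ordered_group leQ) a : tle leQ a a.
Proof. case: HQ => r _ _ _ _; case: a => //= x; exact: r. Qed.

Lemma tle_trans (Q : zmodType) (leQ : rel Q) (HQ : ordered_group leQ) a b c :
  tle leQ a b -> tle leQ b c -> tle leQ a c.
Proof.
case: HQ => _ _ t _ _; case: a => [x|] //; case: b => [y|] //; case: c => [z|] //=.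
move=> h1 h2; exact: (t _ _ _ h1 h2).
Qed.

Lemma tle_anti (Q : zmodType) (leQ : rel Q) (HQ : ordered_group leQ) a b :
  tle leQ a b -> tle leQ b a -> a = b.
Proof.
case: HQ => _ an _ _ _; case: a => [x|] //; case: b => [y|] //= h1 h2.
by rewrite (an x y) // h1 h2.
Qed.

Lemma tle_total (Q : zmodType) (leQ : rel Q) (HQ : ordered_group leQ) a b :
  tle leQ a b || tle leQ b a.
Proof. case: HQ => _ _ _ to _; case: a => [x|] //; case: b => [y|] //=. Qed.

Lemma tle_None (Q : zmodType) (leQ : rel Q) a : tle leQ a None -> a = None.
Proof. by case: a. Qed.

Lemma tmax_cases (Q : zmodType) (leQ : rel Q) a b : tmax leQ a b = a \/ tmax leQ a b = b.
Proof. by rewrite /tmax; case: ifP; auto. Qed.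

Lemma tle_maxl (Q : zmodType) (leQ : rel Q) (HQ : ordered_group leQ) a b :
  tle leQ a (tmax leQ a b).
Proof. rewrite /tmax; case: ifP => // _; exact: tle_refl. Qed.

Lemma tle_maxr (Q : zmodType) (leQ : rel Q) (HQ : ordered_group leQ) a b :
  tle leQ b (tmax leQ a b).
Proof.
rewrite /tmax; case: ifP => h; first exact: tle_refl.
by have := tle_total HQ a b; rewrite h.
Qed.

Lemma tle_lub (Q : zmodType) (leQ : rel Q) a b m :
  tle leQ a m -> tle leQ b m -> tle leQ (tmax leQ a b) m.
Proof. by move=> h1 h2; case: (tmax_cases leQ a b) => ->. Qed.

Lemma big_tle (Q : zmodType) (leQ : rel Q) (HQ : ordered_group leQ) (I : eqType)
  (r : seq I) (F : I -> option Q) j :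
  j \in r -> tle leQ (F j) (\big[tmax leQ/None]_(i <- r) F i).
Proof.
elim: r => // y r IH; rewrite inE big_cons; case/orP => [/eqP->|/IH h].
  exact: tle_maxl.
exact: tle_trans h (tle_maxr HQ _ _).
Qed.

Lemma big_att (Q : zmodType) (leQ : rel Q) k (F : 'I_k -> option Q) :
  \big[tmax leQ/None]_(i < k) F i = None \/
  exists j, F j = \big[tmax leQ/None]_(i < k) F i.
Proof.
apply: (big_ind (fun m => m = None \/ exists j, F j = m)); first by left.
  move=> a b ha hb; by case: (tmax_cases leQ a b) => ->.
by move=> i _; right; exists i.
Qed.

Lemma tmul0l (Q : zmodType) (y : option Q) : tmul (Some 0) y = y.
Proof. by case: y => //= s; rewrite add0r. Qed.
Lemma tmul0r (Q : zmodType) (y : option Q) : tmul y (Some 0) = y.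
Proof. by case: y => //= s; rewrite addr0. Qed.
Lemma tpow0 (Q : zmodType) (y : option Q) : tpow y 0 = Some 0.
Proof. by case: y. Qed.
Lemma tpow1 (Q : zmodType) (y : option Q) : tpow y 1 = y.
Proof. by case: y => //= s; rewrite mulr1n. Qed.
Lemma tpow2 (Q : zmodType) (y : option Q) : tpow y 2 = tmul y y.
Proof. by case: y => //= s; rewrite mulr2n. Qed.


Lemma v_scal (K : fieldType) (A : comAlgType K) (Q : zmodType) (leQ : rel Q)
  (v : A -> option Q) (Hv : valuation leQ v) (c : K) m : c != 0 -> v (c *: m) = v m.
Proof.
case: Hv => vm _ _ vc hc; rewrite -mulr_algl vm vc //; exact: tmul0l.
Qed.

Lemma v_one (K : fieldType) (A : comAlgType K) (Q : zmodType) (leQ : rel Q)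
  (v : A -> option Q) (Hv : valuation leQ v) : v 1 = Some 0.
Proof. case: Hv => _ _ _ vc; by have := vc 1 (oner_neq0 K); rewrite scale1r. Qed.

Lemma v_opp (K : fieldType) (A : comAlgType K) (Q : zmodType) (leQ : rel Q)
  (v : A -> option Q) (Hv : valuation leQ v) a : v (- a) = v a.
Proof. by rewrite -scaleN1r (v_scal Hv) // oppr_eq0 oner_neq0. Qed.

Lemma v_exp (K : fieldType) (A : comAlgType K) (Q : zmodType) (leQ : rel Q)
  (v : A -> option Q) (Hv : valuation leQ v) a n : v (a ^+ n) = tpow (v a) n.
Proof.
elim: n => [|n IH]; first by rewrite expr0 (v_one Hv) tpow0.
case: (Hv) => vm _ _ _; rewrite exprS vm IH.
by case: (v a) => //= s; rewrite mulrS.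
Qed.

Lemma part1 (K : fieldType) (A : comAlgType K) (Q : zmodType) (leQ : rel Q)
  (HQ : ordered_group leQ) (v : A -> option Q) (X : A -> Prop) :
  valuation leQ v -> in_trop_var leQ X v.
Proof.
move=> Hv n k x c e [_ _ _ Hc Hsum].
set t := fun j => tmono (e j) (fun i => v (x i)).
have Ht : forall j, v (c j *: \prod_(i < n) x i ^+ e j i) = t j.
  move=> j; rewrite (v_scal Hv) // /t /tmono.
  case: (Hv) => vm _ _ _.
  rewrite (big_morph v vm (v_one Hv)); apply: eq_bigr => i _; exact: (v_exp Hv).
rewrite /in_trop_hyp.
set M := tpoly leQ e _.
have HM : M = \big[tmax leQ/None]_(j < k) t j by [].
case: (big_att leQ t) => [hN|[j0 Hj0]]; first by left; rewrite HM.
rewrite -HM in Hj0.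
case: (M =P None) => [->|MN]; first by left.
case: (classic (exists j, j != j0 /\ t j = M)) => [[j [Hj HjM]]|Hno].
  by right; exists j0, j; rewrite eq_sym.
exfalso.
have Hlt : forall j, j != j0 -> tle leQ (t j) M && (t j != M).
  move=> j hj; apply/andP; split.
    rewrite HM; apply: big_tle => //; exact: mem_index_enum.
  by apply/eqP => h; apply: Hno; exists j.
have Hr : tle leQ (v (\sum_(j < k | j != j0) c j *: \prod_(i < n) x i ^+ e j i)) M &&
          (v (\sum_(j < k | j != j0) c j *: \prod_(i < n) x i ^+ e j i) != M).
  apply: (big_ind (fun s => tle leQ (v s) M && (v s != M))).
  - case: (Hv) => _ _ -> _; rewrite /=; by apply/eqP => h; apply: MN.
  - move=> a b /andP[ha na] /andP[hb nb].
    case: (Hv) => _ vu _ _.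
    have hab := vu a b.
    have [w [hw1 hw2]] : exists w, tle leQ w M /\ w != M /\ tle leQ (v (a + b)) w.
      by case: (tmax_cases leQ (v a) (v b)) => E; rewrite E in hab;
        [exists (v a)|exists (v b)].
    case: hw2 => hw2 hw3.
    apply/andP; split; first exact: tle_trans hw3 hw1.
    apply/eqP => E; move/eqP: hw2; apply; apply: (tle_anti HQ hw1).
    by rewrite -E.
  - by move=> j hj; rewrite Ht; apply: Hlt.
move: Hsum; rewrite /peval (bigD1 j0) //= => /eqP; rewrite addr_eq0 => /eqP E.
move: Hr; rewrite -(v_opp Hv) -E Ht Hj0 eqxx andbF //.
Qed.
Lemma ord2_cases (j : 'I_2) : j = ord0 \/ j = ord_max.
Proof. by case: j => [[|[|?]] ?] //; [left|right]; apply: val_inj. Qed.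

Definition o1 : 'I_3 := Ordinal (isT : (1 < 3)%N).

Lemma ord3_cases (j : 'I_3) : [\/ j = ord0, j = o1 | j = ord_max].
Proof. by case: j => [[|[|[|?]]] ?] //; [apply: Or31|apply: Or32|apply: Or33]; apply: val_inj. Qed.

Lemma trop2 (Q : zmodType) (leQ : rel Q) (HQ : ordered_group leQ) (F : 'I_2 -> option Q) :
  (\big[tmax leQ/None]_(j < 2) F j = None \/ exists j1 j2 : 'I_2, j1 != j2 /\
     F j1 = \big[tmax leQ/None]_(j < 2) F j /\ F j2 = \big[tmax leQ/None]_(j < 2) F j) ->
  F ord0 = F ord_max.
Proof.
have Hle : forall j, tle leQ (F j) (\big[tmax leQ/None]_(j < 2) F j).
  move=> j; apply: big_tle => //; exact: mem_index_enum.
move=> [H|[j1 [j2 [Hne [H1 H2]]]]].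
  have h0 := Hle ord0; have h1 := Hle ord_max; rewrite H in h0 h1.
  by rewrite (tle_None h0) (tle_None h1).
case: (ord2_cases j1) => E1; case: (ord2_cases j2) => E2;
  subst j1 j2; rewrite ?eqxx // in Hne; by rewrite H1 H2.
Qed.

Lemma trop3 (Q : zmodType) (leQ : rel Q) (HQ : ordered_group leQ) (F : 'I_3 -> option Q) :
  (\big[tmax leQ/None]_(j < 3) F j = None \/ exists j1 j2 : 'I_3, j1 != j2 /\
     F j1 = \big[tmax leQ/None]_(j < 3) F j /\ F j2 = \big[tmax leQ/None]_(j < 3) F j) ->
  tle leQ (F ord0) (tmax leQ (F o1) (F ord_max)).
Proof.
have Hle : forall j, tle leQ (F j) (\big[tmax leQ/None]_(j < 3) F j).
  move=> j; apply: big_tle => //; exact: mem_index_enum.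
move=> [H|[j1 [j2 [Hne [H1 H2]]]]].
  by have h0 := Hle ord0; rewrite H in h0; rewrite (tle_None h0).
have [j [Hj HjM]] : exists j, (j = o1 \/ j = ord_max) /\ F j = \big[tmax leQ/None]_(j < 3) F j.
  case: (ord3_cases j1) => E1.
  - exists j2; split => //; subst j1.
    by case: (ord3_cases j2) => E2; subst j2; auto.
  - by exists j1; auto.
  - by exists j1; auto.
apply: (tle_trans HQ (Hle ord0)); rewrite -HjM.
by case: Hj => ->; [apply: tle_maxl | apply: tle_maxr].
Qed.

Lemma gen_all (K : fieldType) (A : comAlgType K) : generating (fun _ : A => True).
Proof.
move=> a; exists 1%N, 1%N, (fun _ => a), (fun _ => 1), (fun _ _ => 1%N); split => //.
by rewrite /peval big_ord1 big_ord1 scale1r expr1.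
Qed.

Lemma two_term (K : fieldType) (A : comAlgType K) (Q : zmodType) (leQ : rel Q)
  (HQ : ordered_group leQ) (v : A -> option Q)
  (Hv : in_trop_var leQ (fun _ => True) v) n (x : 'I_n -> A) (e0 e1 : 'I_n -> nat)
  (c0 c1 : K) :
  injective x -> (exists i, e0 i != e1 i) -> c0 != 0 -> c1 != 0 ->
  c0 *: \prod_(i < n) x i ^+ e0 i + c1 *: \prod_(i < n) x i ^+ e1 i = 0 ->
  tmono e0 (fun i => v (x i)) = tmono e1 (fun i => v (x i)).
Proof.
move=> xi [i0 Hi0] h0 h1 Hs.
set c := (fun j : 'I_2 => if val j == 0%N then c0 else c1).
set e := (fun j : 'I_2 => if val j == 0%N then e0 else e1).
have Hid : ideal_elt (fun _ => True) x c e.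
  split => //.
  + move=> j1 j2 Hj.
    case: (ord2_cases j1) => E1; case: (ord2_cases j2) => E2; subst j1 j2 => //.
    * by move: (Hj i0) Hi0; rewrite /e /= => ->; rewrite eqxx.
    * by move: (Hj i0) Hi0; rewrite /e /= => ->; rewrite eqxx.
  + by move=> j; rewrite /c; case: (val j == 0%N).
  + by rewrite /peval big_ord_recl big_ord1.
have := trop2 HQ (F := fun j => tmono (e j) (fun i => v (x i))) (Hv _ _ _ _ _ Hid).
by [].

Qed.

Lemma three_term (K : fieldType) (A : comAlgType K) (Q : zmodType) (leQ : rel Q)
  (HQ : ordered_group leQ) (v : A -> option Q)
  (Hv : in_trop_var leQ (fun _ => True) v) n (x : 'I_n -> A) (e0 e1 e2 : 'I_n -> nat)
  (c0 c1 c2 : K) :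
  injective x -> (exists i, e0 i != e1 i) -> (exists i, e0 i != e2 i) ->
  (exists i, e1 i != e2 i) -> c0 != 0 -> c1 != 0 -> c2 != 0 ->
  c0 *: \prod_(i < n) x i ^+ e0 i + (c1 *: \prod_(i < n) x i ^+ e1 i
     + c2 *: \prod_(i < n) x i ^+ e2 i) = 0 ->
  tle leQ (tmono e0 (fun i => v (x i)))
    (tmax leQ (tmono e1 (fun i => v (x i))) (tmono e2 (fun i => v (x i)))).
Proof.
move=> xi [i0 Hi0] [i1 Hi1] [i2 Hi2] h0 h1 h2 Hs.
set c := (fun j : 'I_3 => if val j == 0%N then c0 else if val j == 1%N then c1 else c2).
set e := (fun j : 'I_3 => if val j == 0%N then e0 else if val j == 1%N then e1 else e2).
have Hid : ideal_elt (fun _ => True) x c e.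
  split => //.
  + move=> j1 j2 Hj.
    case: (ord3_cases j1) => E1; case: (ord3_cases j2) => E2; subst j1 j2 => //.
    * by move: (Hj i0) Hi0; rewrite /e /= => ->; rewrite eqxx.
    * by move: (Hj i1) Hi1; rewrite /e /= => ->; rewrite eqxx.
    * by move: (Hj i0) Hi0; rewrite /e /= => ->; rewrite eqxx.
    * by move: (Hj i2) Hi2; rewrite /e /= => ->; rewrite eqxx.
    * by move: (Hj i1) Hi1; rewrite /e /= => ->; rewrite eqxx.
    * by move: (Hj i2) Hi2; rewrite /e /= => ->; rewrite eqxx.
  + move=> j; rewrite /c; case: (val j == 0%N) => //; by case: (val j == 1%N).
  + by rewrite /peval !big_ord_recl big_ord0 addr0.
have := trop3 HQ (F := fun j => tmono (e j) (fun i => v (x i))) (Hv _ _ _ _ _ Hid).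
by [].
Qed.

Lemma one_term (K : fieldType) (A : comAlgType K) (Q : zmodType) (leQ : rel Q)
  (v : A -> option Q)
  (Hv : in_trop_var leQ (fun _ => True) v) n (x : 'I_n -> A) (e0 : 'I_n -> nat) (c0 : K) :
  injective x -> c0 != 0 -> c0 *: \prod_(i < n) x i ^+ e0 i = 0 ->
  tmono e0 (fun i => v (x i)) = None.
Proof.
move=> xi h0 Hs.
have Hid : ideal_elt (fun _ => True) x (fun _ : 'I_1 => c0) (fun _ => e0).
  split => //.
  + by move=> j1 j2 _; apply: val_inj; case: j1 j2 => [[|?] ?] [[|?] ?].
  + by rewrite /peval big_ord1.
case: (Hv _ _ _ _ _ Hid) => [|[j1 [j2 [Hne _]]]]; first by rewrite /tpoly big_ord_recl big_ord0 /tmax; case: (tmono _ _).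
by move: Hne; case: j1 j2 => [[|?] ?] [[|?] ?].
Qed.

Lemma uniq_inj (A : eqType) (a0 : A) (s : seq A) :
  uniq s -> injective (fun i : 'I_(size s) => nth a0 s i).
Proof. move=> us i j /eqP; rewrite nth_uniq // => /eqP; exact: val_inj. Qed.



Ltac simpl_tm := rewrite /tmono ?big_ord_recl ?big_ord0 /= ?tpow0 ?tpow1 ?tpow2
  ?tmul0r ?tmul0l ?expr0 ?expr1 ?mulr1 ?mul1r ?scale1r.

Lemma part3 (K : fieldType) (A : comAlgType K) (Q : zmodType) (leQ : rel Q)
  (HQ : ordered_group leQ) (v : A -> option Q)
  (Hv : in_trop_var leQ (fun _ => True) v) : valuation leQ v.
Proof.
have v0 : v 0 = None.
  have := one_term Hv (x := fun i : 'I_1 => nth 0 [:: 0] i)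
    (e0 := fun i => nth 0%N [:: 1%N] i) (uniq_inj (a0 := 0) (s := [:: 0]) isT) (oner_neq0 K).
  simpl_tm; by apply.
split => //.
- move=> a b; case: (eqVneq a b) => [<-|ab].
  + case: (eqVneq (a * a) a) => [E|E].
    * have := two_term HQ Hv (x := fun i : 'I_1 => nth 0 [:: a] i)
        (e0 := fun i => nth 0%N [:: 2%N] i) (e1 := fun i => nth 0%N [:: 1%N] i)
        (c0 := 1) (c1 := -1) (uniq_inj (a0 := 0) (s := [:: a]) isT).
      simpl_tm. rewrite E => -> //.
      - by exists ord0.
      - by rewrite oner_neq0.
      - by rewrite oppr_eq0 oner_neq0.
      - by rewrite ?expr2 ?E scaleN1r subrr.
    * have := two_term HQ Hv (x := fun i : 'I_2 => nth 0 [:: a * a; a] i)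
        (e0 := fun i => nth 0%N [:: 1; 0]%N i) (e1 := fun i => nth 0%N [:: 0; 2]%N i)
        (c0 := 1) (c1 := -1) (uniq_inj (a0 := 0) (s := [:: a * a; a]) _).
      simpl_tm. move=> -> //.
      - by rewrite /= inE andbT.
      - by exists ord0.
      - by rewrite oner_neq0.
      - by rewrite oppr_eq0 oner_neq0.
      - by rewrite scaleN1r subrr.
  + case: (eqVneq (a * b) a) => [E|E1].
    * have := two_term HQ Hv (x := fun i : 'I_2 => nth 0 [:: a; b] i)
        (e0 := fun i => nth 0%N [:: 1; 1]%N i) (e1 := fun i => nth 0%N [:: 1; 0]%N i)
        (c0 := 1) (c1 := -1) (uniq_inj (a0 := 0) (s := [:: a; b]) _).
      simpl_tm. rewrite E => -> //.
      - by rewrite /= inE andbT.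
      - by exists ord_max.
      - by rewrite oner_neq0.
      - by rewrite oppr_eq0 oner_neq0.
      - by rewrite ?E scaleN1r subrr.
    case: (eqVneq (a * b) b) => [E|E2].
    * have := two_term HQ Hv (x := fun i : 'I_2 => nth 0 [:: a; b] i)
        (e0 := fun i => nth 0%N [:: 1; 1]%N i) (e1 := fun i => nth 0%N [:: 0; 1]%N i)
        (c0 := 1) (c1 := -1) (uniq_inj (a0 := 0) (s := [:: a; b]) _).
      simpl_tm. rewrite E => -> //.
      - by rewrite /= inE andbT.
      - by exists ord0.
      - by rewrite oner_neq0.
      - by rewrite oppr_eq0 oner_neq0.
      - by rewrite ?E scaleN1r subrr.
    * have := two_term HQ Hv (x := fun i : 'I_3 => nth 0 [:: a * b; a; b] i)
        (e0 := fun i => nth 0%N [:: 1; 0; 0]%N i) (e1 := fun i => nth 0%N [:: 0; 1; 1]%N i)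
        (c0 := 1) (c1 := -1) (uniq_inj (a0 := 0) (s := [:: a * b; a; b]) _).
      simpl_tm. move=> -> //.
      - by rewrite /= !inE negb_or E1 E2 ab.
      - by exists ord0.
      - by rewrite oner_neq0.
      - by rewrite oppr_eq0 oner_neq0.
      - by rewrite scaleN1r subrr.
- move=> a b.
  case: (eqVneq (a + b) a) => [E|E1]; first by rewrite E; apply: tle_maxl.
  case: (eqVneq (a + b) b) => [E|E2]; first by rewrite E; apply: tle_maxr.
  case: (eqVneq (a + b) 0) => [->|E0]; first by rewrite v0.
  case: (eqVneq a b) => [E|ab].
  + subst b.
    have := two_term HQ Hv (x := fun i : 'I_2 => nth 0 [:: a + a; a] i)
        (e0 := fun i => nth 0%N [:: 1; 0]%N i) (e1 := fun i => nth 0%N [:: 0; 1]%N i)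
        (c0 := 1) (c1 := - 2%:R) (uniq_inj (a0 := 0) (s := [:: a + a; a]) _).
    simpl_tm. move=> -> //.
    * exact: tle_maxl.
    * by rewrite /= inE andbT.
    * by exists ord0.
    * by rewrite oner_neq0.
    * rewrite oppr_eq0; apply: contra E0 => /eqP h2.
      by rewrite -mulr2n -scaler_nat h2 scale0r.
    * by rewrite scaleNr scaler_nat mulr2n subrr.
  + have := three_term HQ Hv (x := fun i : 'I_3 => nth 0 [:: a + b; a; b] i)
        (e0 := fun i => nth 0%N [:: 1; 0; 0]%N i) (e1 := fun i => nth 0%N [:: 0; 1; 0]%N i)
        (e2 := fun i => nth 0%N [:: 0; 0; 1]%N i)
        (c0 := 1) (c1 := -1) (c2 := -1) (uniq_inj (a0 := 0) (s := [:: a + b; a; b]) _).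
    simpl_tm. apply.
    * by rewrite /= !inE negb_or E1 E2 ab.
    * by exists ord0.
    * by exists ord0.
    * by exists o1.
    * by rewrite oner_neq0.
    * by rewrite oppr_eq0 oner_neq0.
    * by rewrite oppr_eq0 oner_neq0.
    * by rewrite !scaleN1r -opprD subrr.
- move=> c hc.
  have := two_term HQ Hv (x := fun i : 'I_1 => nth 0 [:: c%:A] i)
     (e0 := fun i => nth 0%N [:: 1%N] i) (e1 := fun i => nth 0%N [:: 0%N] i)
     (c0 := 1) (c1 := - c) (uniq_inj (a0 := 0) (s := [:: c%:A]) isT).
  simpl_tm. move=> -> //.
  - by exists ord0.
  - by rewrite oner_neq0.
  - by rewrite oppr_eq0.
  - by rewrite scaleNr subrr.
Qed.


Unset Implicit Arguments.
Set Strict Implicit.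

(* Families q : (A -> Prop) -> (A -> option Q) play the role of elements of
   prod_X Q^X (q X is the X-component, only relevant on X). *)
Theorem theorem2p1 (K : fieldType) (A : comAlgType K)
  (Q : zmodType) (leQ : rel Q) (HQ : ordered_group leQ) :
  (* pi_X takes values in tr_Q(I_X) *)
  (forall (v : A -> option Q) (X : A -> Prop),
     valuation leQ v -> generating X -> in_trop_var leQ X v)
  /\
  (* the induced map V_Q(A) -> lim_X tr_Q(I_X) is injective *)
  (forall v w : A -> option Q,
     valuation leQ v -> valuation leQ w ->
     (forall X : A -> Prop, generating X -> forall x, X x -> v x = w x) ->
     forall a, v a = w a)
  /\
  (* ... and surjective onto the inverse limit *)
  (forall q : (A -> Prop) -> A -> option Q,
     (forall X : A -> Prop, generating X -> in_trop_var leQ X (q X)) ->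
     (forall X Y : A -> Prop, generating X -> generating Y ->
        (forall a, X a -> Y a) -> forall x, X x -> q Y x = q X x) ->
     exists v : A -> option Q, valuation leQ v /\
       forall X : A -> Prop, generating X -> forall x, X x -> v x = q X x).
Proof.
split; [|split].
- move=> v X Hv _; exact: (@part1 K A Q leQ HQ v X Hv).
- move=> v w _ _ H a; exact: (H _ (@gen_all K A) a I).
- move=> q Hq Hc; exists (q (fun _ => True)); split.
    exact: (@part3 K A Q leQ HQ _ (Hq _ (@gen_all K A))).
  move=> X gX x Xx.
  exact: (Hc X (fun _ => True) gX (@gen_all K A) (fun _ _ => I) x Xx).
Qed.
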